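(* Let $\mathcal N$ be a phylogenetic network on $X$ with vertex set $V$ and $|X|\ge 2$, fix an ordering $v_1,\dots,v_t$ of $V\setminus X$, and let $\Sigma=\Sigma_{\mathcal N}=\{(x,\sigma(x)):x\in X\}$ be the corresponding ancestral profile. Let $\{a,b\}\subseteq X$. (i) Suppose $\{a,b\}$ is a cherry of $\mathcal N$. Choose any index $j$ with $\sigma_j(a)=\sigma_j(b)=1$ and $\sigma_j(x)=0$ for all $x\in X\setminus\{a,b\}$, and let $\Sigma'=\{(x,\sigma'(x)):x\in X\setminus\{b\}\}$, where $\sigma'(x)$ is obtained from $\sigma(x)$ by deleting the $j$-th entry. Then $\Sigma'$ is the ancestral profile of the network $\mathcal N'$ obtained from $\mathcal N$ by reducing $b$, with respect to some ordering of the non-leaf vertices of $\mathcal N'$. (ii) Suppose $\{a,b\}$ is a reticulated cherry of $\mathcal N$ with reticulation leaf $b$. Choose any index $j$ with $\sigma_j(a)=\sigma_j(b)=1$ and $\sigma_j(x)=0$ for all $x\in X\setminus\{a,b\}$, and any index $k$ with $\sigma_k(b)=1$ and $\sigma_k(x)=0$ for all $x\in X\setminus\{b\}$. Let $\Sigma'=\{(x,\sigma'(x)):x\in X\}$, where for $x\neq b$, $\sigma'(x)$ is obtained from $\sigma(x)$ by deleting the entries $j$ and $k$, and $\sigma'(b)$ is the tuple with entries $\sigma_i(b)-\sigma_i(a)$ for $i\notin\{j,k\}$ (in the original order). Then $\Sigma'$ is the ancestral profile of the network $\mathcal N'$ obtained from $\mathcal N$ by cutting $\{a,b\}$, with respect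 to some ordering of the non-leaf vertices of $\mathcal N'$.
   Context: A phylogenetic network on $X$ ($X$ non-empty finite) is a rooted acyclic directed graph with no parallel arcs such that: the unique root has in-degree $0$ and out-degree $2$; every vertex of out-degree $0$ has in-degree $1$, and the set of such vertices (leaves) is $X$; every other vertex has either in-degree $1$ and out-degree $2$ (tree vertex) or in-degree $2$ and out-degree $1$ (reticulation). If $|X|=1$ a single vertex is also allowed. For an ordering $v_1,\dots,v_t$ of the non-leaf vertices and $x\in X$, the ancestral tuple $\sigma(x)=(\sigma_1(x),\dots,\sigma_t(x))$ has $\sigma_i(x)$ equal to the number of directed paths from $v_i$ to $x$; the ancestral profile is $\{(x,\sigma(x)):x\in X\}$. For a $2$-element subset $\{a,b\}\subseteq X$ with parents $p_a,p_b$: $\{a,b\}$ is a cherry if $p_a=p_b$; it is a reticulated cherry with reticulation leaf $b$ if $p_b$ is a reticulation and $(p_a,p_b)$ is an arc. Reducing $b$ in a cherry means deleting $b$ and suppressing the resulting vertex of in-degree 1 and out-degree 1 (if the common parent is the root, delete $b$ and the root, leaving the single vertex $a$). Cutting a reticulated cherry $\{a,b\}$ means deleting the arc $(p_a,p_b)$ and suppressing the two resulting vertices of in-degree 1 and out-degree 1. *)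

(* Defs.v *)
From mathcomp Require Import all_boot.
Unset Printing Implicit Defensive.

(* A directed graph without parallel arcs: vertex set V (finite), arc relation E. *)
Definition indeg {V : finType} (E : rel V) (v : V) : nat := #|[set u | E u v]|.
Definition outdeg {V : finType} (E : rel V) (v : V) : nat := #|[set w | E v w]|.
Definition is_leaf {V : finType} (E : rel V) (v : V) : bool := outdeg E v == 0.

Definition acyclic {V : finType} (E : rel V) : Prop :=
  forall (v : V) (t : seq V), t != [::] -> path E v t -> last v t != v.

(* phylogenetic network on its leaf set X = {v | outdeg v = 0} *)
Definition phylo_network {V : finType} (E : rel V) : Prop :=
  acyclic E /\
  (#|V| = 1 \/
   exists r : V,
     [/\ forall v, (indeg E v == 0) = (v == r),
         outdeg E r = 2 &
         forall v, v != r ->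
           [\/ indeg E v = 1 /\ outdeg E v = 0,
               indeg E v = 1 /\ outdeg E v = 2 |
               indeg E v = 2 /\ outdeg E v = 1]]).

(* number of directed paths from v to x (paths = vertex-distinct walks;
   such a path has fewer than #|V| arcs) *)
Definition npaths {V : finType} (E : rel V) (v x : V) : nat :=
  \sum_(k < #|V|)
     #|[set t : k.-tuple V | [&& path E v t, last v t == x & uniq (v :: t)]]|.

Definition is_ordering {V : finType} (E : rel V) (s : seq V) : Prop :=
  uniq s /\ forall v, (v \in s) = ~~ is_leaf E v.

Definition anc_tuple {V : finType} (E : rel V) (s : seq V) (x : V) : seq nat :=
  [seq npaths E v x | v <- s].

(* ancestral profile of (V',E') with ordering s, leaves labelled via lab,
   as a relation {(lab x, sigma(x)) : x leaf} *)
Definition profile {V' : finType} (E' : rel V') (s : seq V') {T : Type}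
  (lab : V' -> T) : T -> seq nat -> Prop :=
  fun x sg => exists x' : V', [/\ is_leaf E' x', lab x' = x & sg = anc_tuple E' s x'].

Definition del_idx (J : seq nat) (s : seq nat) : seq nat :=
  [seq nth 0 s i | i <- iota 0 (size s) & i \notin J].

(* Reducing b in a cherry {a,b} with common parent p: delete b and p,
   joining the parent of p (if any) to a. *)
Definition red_vert {V : finType} (b p : V) := {v : V | (v != b) && (v != p)}.
Definition red_rel {V : finType} (E : rel V) (b p : V) : rel (red_vert b p) :=
  fun u w => E (val u) (val w) || (E (val u) p && E p (val w)).

(* Cutting the reticulated cherry {a,b} (parents pa, pb; arc (pa,pb)):
   delete arc (pa,pb) and suppress pa and pb. *)
Definition cut_vert {V : finType} (pa pb : V) := {v : V | (v != pa) && (v != pb)}.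
Definition cut_rel {V : finType} (E : rel V) (pa pb : V) : rel (cut_vert pa pb) :=
  fun u w =>
    [|| E (val u) (val w),
        E (val u) pa && E pa (val w) && (val w != pb)
      | E (val u) pb && E pb (val w) && (val u != pa)].

(* Main.v *)
Require Import Defs.
From mathcomp Require Import all_boot zify.
Set Implicit Arguments. Unset Strict Implicit.

Lemma card_setE (T : finType) (P : pred T) : #|[set t | P t]| = \sum_t (P t : nat).
Proof.
rewrite -sum1_card big_mkcond /=; apply: eq_bigr => t _; rewrite inE; by case: (P t).
Qed.

Lemma sum_sig (I : finType) (P : pred I) (F : I -> nat) :
  \sum_(i | P i) F i = \sum_(x : {x | P x}) F (val x).
Proof.
rewrite (reindex_omap (val : {x | P x} -> I) insub); last first.
  by move=> i Pi; rewrite insubT.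
apply: eq_bigl=> -[i iA]/=; rewrite insubT ?iA /=; apply/eqP; congr Some; exact: val_inj.
Qed.

Section G.
Variables (V : finType) (E : rel V).

Lemma leafP v : is_leaf E v = [forall w, ~~ E v w].
Proof.
rewrite /is_leaf /outdeg cards_eq0; apply/idP/idP.
  move/eqP=> H; apply/forallP => w; apply/negP => Hw.
  have : w \in [set w | E v w] by rewrite inE.
  by rewrite H inE.
move/forallP => H; apply/eqP/setP => w; rewrite inE in_set0; exact/negbTE.
Qed.

Lemma acyclic_rank (m : V -> nat) : (forall u w, E u w -> m w < m u) -> acyclic E.
Proof.
move=> Hm v t Ht Hp.
suff : m (last v t) < m v by apply: contraTneq => ->; rewrite ltnn.
elim: t v Ht Hp => // w t IH v _ /= /andP[Evw Hp].
case: t IH Hp => [|w' t] IH Hp /=; first exact: Hm.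
apply: ltn_trans (Hm _ _ Evw); exact: IH.
Qed.

Lemma in_path_cycle v w t : acyclic E -> E v w -> path E w t -> v \notin w :: t.
Proof.
move=> Hac Evw Hp; apply/negP => Hin.
have Hp' : path E v (w :: t) by rewrite /= Evw.
case/splitPr: Hin Hp' => p1 p2.
rewrite cat_path /= => /and3P[H1 H2 _].
have := Hac v (rcons p1 v); rewrite rcons_path H1 H2 last_rcons eqxx.
by case: p1 {H1 H2} => [|? ?] /(_ isT isT).
Qed.

Lemma rank_exists : acyclic E -> exists m : V -> nat, forall u w, E u w -> m w < m u.
Proof.
move=> Hac; exists (fun v => #|[set y | connect E v y]|) => u w Euw.
apply: proper_card; apply/properP; split.
  apply/subsetP => y; rewrite !inE; apply: connect_trans; exact: connect1.
exists u; rewrite !inE ?connect0 //.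
apply/negP => /connectP[p Hp Hl].
have := in_path_cycle Hac Euw Hp; rewrite Hl.
by rewrite mem_last.
Qed.
End G.

Section G.
Variables (V : finType) (E : rel V) (x : V).
Definition cnt k v := #|[set t : k.-tuple V | [&& path E v t, last v t == x & uniq (v :: t)]]|.

Lemma cnt0 v : cnt 0 v = (v == x).
Proof.
rewrite /cnt card_setE.
rewrite (eq_bigr (fun _ => (v == x) : nat)); last first.
  by move=> t _; rewrite tuple0 /= andbT.
by rewrite sum_nat_const card_tuple expn0 mul1n.
Qed.

Lemma cntS k v : acyclic E -> cnt k.+1 v = \sum_w E v w * cnt k w.
Proof.
move=> Hac; rewrite /cnt card_setE.
rewrite (reindex (fun p : V * k.-tuple V => [tuple of p.1 :: p.2])); last first.
  exists (fun t : k.+1.-tuple V => (thead t, [tuple of behead t])).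
    by move=> [w t] _ /=; rewrite theadE; congr pair; apply: val_inj.
  by move=> t _ /=; rewrite [in RHS](tuple_eta t).
rewrite -(pair_bigA _ (fun w (t : k.-tuple V) => ([&& path E v (w :: t), last v (w::t) == x & uniq (v :: w :: t)] : nat))).
apply: eq_bigr => w _.
rewrite card_setE big_distrr; apply: eq_bigr => t _.
rewrite [path _ _ _]/= [last _ _]/=.
case Evw: (E v w) => /=; last by rewrite mul0n.
rewrite mul1n; case Hp: (path E w t) => //=.
have := in_path_cycle Hac Evw Hp.
by move=> /negbTE Hn; rewrite Hn.
Qed.

Lemma cnt_big k v : #|V| <= k -> cnt k v = 0.
Proof.
move=> Hk; rewrite /cnt; apply/eqP; rewrite cards_eq0; apply/eqP/setP => t.
rewrite inE in_set0; apply/negbTE; apply/negP => /and3P[_ _ Hu].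
have := card_uniqP Hu; rewrite /= size_tuple => Hc.
have := max_card (mem (v :: t)); rewrite Hc => H.
by have := leq_trans H Hk; rewrite ltnn.
Qed.

Lemma npathsE v : npaths E v x = \sum_(k < #|V|) cnt k v.
Proof. by []. Qed.

Lemma cnt_last v w n : acyclic E -> E v w -> #|V| = n.+1 -> cnt n w = 0.
Proof.
move=> Hac Evw Hn; rewrite /cnt; apply/eqP; rewrite cards_eq0; apply/eqP/setP => t.
rewrite inE in_set0; apply/negbTE; apply/negP => /and3P[Hp _ Hu].
have Hv := in_path_cycle Hac Evw Hp.
have Hu' : uniq (v :: w :: t) by rewrite [uniq (v :: _)]/= Hv.
have := card_uniqP Hu'; rewrite /= size_tuple => Hc.
have := max_card (mem (v :: w :: t)); rewrite Hc Hn => H.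
by rewrite ltnn in H.
Qed.

Lemma npaths_rec v : acyclic E -> npaths E v x = (v == x) + \sum_w E v w * npaths E w x.
Proof.
move=> Hac.
have : 0 < #|V| by apply/card_gt0P; exists v.
rewrite npathsE (eq_bigr (fun w => E v w * \sum_(k < #|V|) cnt k w)); last by move=> w _; rewrite npathsE.
case Hn: #|V| => [//|n] _.
rewrite big_ord_recl cnt0; congr addn.
rewrite (eq_bigr (fun i : 'I_n => \sum_w E v w * cnt i w)); last by move=> i _; rewrite cntS.
rewrite exchange_big /=; apply: eq_bigr => w _.
rewrite big_ord_recr /= -big_distrr /=.
case Evw: (E v w); last by rewrite !mul0n.
by rewrite (cnt_last Hac Evw Hn) addn0.
Qed.

Lemma npaths_leaf v : acyclic E -> is_leaf E v -> npaths E v x = (v == x).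
Proof.
move=> Hac; rewrite leafP => /forallP H; rewrite npaths_rec // big1 ?addn0 //.
by move=> w _; rewrite (negbTE (H w)).
Qed.
End G.

Section S.
Variables (V : finType).

Lemma split2 (h : V -> nat) (c d : V) : c != d ->
  \sum_w h w = h c + h d + \sum_(w | (w != c) && (w != d)) h w.
Proof.
move=> cd; rewrite (bigD1 c) //= (bigD1 d) /=; last by rewrite eq_sym.
rewrite addnA; congr addn; apply: eq_bigl => w; by rewrite andbC.
Qed.

Lemma sum_pred1 (P : pred V) (h : V -> nat) c : P c ->
  \sum_(w | P w) (w == c) * h w = h c.
Proof.
move=> Pc; rewrite (bigD1 c) //= eqxx mul1n big1 ?addn0 //.
by move=> w /andP[_ /negbTE ->].
Qed.

Lemma sum_ch2 (E : rel V) v c d (h : V -> nat) : c != d ->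
  (forall w, E v w -> (w == c) || (w == d)) -> E v c -> E v d ->
  \sum_w E v w * h w = h c + h d.
Proof.
move=> cd Hch Ec Ed; rewrite (split2 _ cd) Ec Ed !mul1n big1 ?addn0 //.
move=> w /andP[wc wd]; case Evw: (E v w) => //.
by have := Hch _ Evw; rewrite (negbTE wc) (negbTE wd).
Qed.

Lemma sum_ch1 (E : rel V) v c (h : V -> nat) :
  (forall w, E v w -> w == c) -> E v c ->
  \sum_w E v w * h w = h c.
Proof.
move=> Hch Ec; rewrite (bigD1 c) //= Ec mul1n big1 ?addn0 //.
move=> w wc; case Evw: (E v w) => //.
by have := Hch _ Evw; rewrite (negbTE wc).
Qed.
End S.

Section Cut.
Variables (V : finType) (E : rel V) (a b pa pb : V) (m : V -> nat).
Hypotheses (Hac : acyclic E) (Hm : forall u w, E u w -> m w < m u)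
  (la : is_leaf E a) (lb : is_leaf E b) (ab : a != b)
  (Epaa : E pa a) (Epbb : E pb b) (Epapb : E pa pb)
  (par_a : forall y, E y a -> y = pa) (par_b : forall y, E y b -> y = pb)
  (ch_pa : forall w, E pa w -> (w == a) || (w == pb))
  (ch_pb : forall w, E pb w -> w == b).

Notation V' := (cut_vert pa pb).
Notation E' := (cut_rel E pa pb).

Lemma nleaf_of v w : E v w -> ~~ is_leaf E v.
Proof. by move=> Evw; rewrite leafP negb_forall; apply/existsP; exists w; rewrite negbK. Qed.

Lemma papb : pa != pb.
Proof. by apply/eqP => e; have := Hm Epapb; rewrite e ltnn. Qed.
Lemma apa : a != pa.
Proof. by apply/eqP => e; have := nleaf_of Epaa; rewrite -e la. Qed.
Lemma apb : a != pb.
Proof. by apply/eqP => e; have := nleaf_of Epbb; rewrite -e la. Qed.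
Lemma bpa : b != pa.
Proof. by apply/eqP => e; have := nleaf_of Epaa; rewrite -e lb. Qed.
Lemma bpb : b != pb.
Proof. by apply/eqP => e; have := nleaf_of Epbb; rewrite -e lb. Qed.

Lemma cut_rank (u w : V') : E' u w -> m (val w) < m (val u).
Proof.
rewrite /cut_rel => /or3P[H|/andP[/andP[H1 H2] _]|/andP[/andP[H1 H2] _]].
- exact: Hm.
- exact: ltn_trans (Hm H2) (Hm H1).
- exact: ltn_trans (Hm H2) (Hm H1).
Qed.

Lemma cut_acyclic : acyclic E'.
Proof. exact: (acyclic_rank (m := fun u => m (val u)) cut_rank). Qed.

Lemma cut_E (u w : V') : (E' u w : nat) =
  E (val u) (val w) + (E (val u) pa && (val w == a)) + (E (val u) pb && (val w == b)).
Proof.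
case: u w => [U HU] [W HW] /=; case/andP: (HU) => U1 U2; case/andP: (HW) => W1 W2.
rewrite /cut_rel /= -!andbA.
have -> : (E pa W && (W != pb)) = (W == a).
  apply/idP/idP => [/andP[H1 H2]|/eqP ->]; last by rewrite Epaa apb.
  by have := ch_pa H1; rewrite (negbTE H2) orbF.
have -> : (E pb W && (U != pa)) = (W == b) by rewrite U1 andbT; apply/idP/idP => [/ch_pb|/eqP ->].
case: (eqVneq W a) => [->|Wa].
  have -> : E U a = false by apply/negP => /par_a e; rewrite e eqxx in U1.
  by rewrite (negbTE ab) !andbF !andbT /=; case: (E U pa).
case: (eqVneq W b) => [->|Wb].
  have -> : E U b = false by apply/negP => /par_b e; rewrite e eqxx in U2.
  by rewrite !andbF !andbT /=; case: (E U pb).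
by rewrite !andbF !orbF addn0 addn0.
Qed.


Lemma arith1 (s s' tg tb ua ub al be : nat) : s + (tg + al) = tb + al + be -> s = s' ->
  ub + s' + (ua + (al + tg)) = ub + (al + be + tb) + ua.
Proof. move=> H <-; lia. Qed.

Lemma arith2 (s s' t ux al : nat) : s = t + al -> s = s' -> ux + s' = ux + (al + t).
Proof. by move=> H <-; rewrite H (addnC t). Qed.

Lemma sum_cut (F : V -> nat) (u : V') :
  \sum_(w' : V') E' u w' * F (val w') =
  \sum_(w | (w != pa) && (w != pb)) E (val u) w * F w
  + E (val u) pa * F a + E (val u) pb * F b.
Proof.
rewrite (eq_bigr (fun w' : V' => (E (val u) (val w') + (E (val u) pa && (val w' == a)) + (E (val u) pb && (val w' == b))) * F (val w'))); last by move=> w' _; rewrite cut_E.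
rewrite -(sum_sig (fun w => (w != pa) && (w != pb)) (fun w => (E (val u) w + (E (val u) pa && (w == a)) + (E (val u) pb && (w == b))) * F w)).
rewrite (eq_bigr (fun w => E (val u) w * F w + E (val u) pa * ((w == a) * F w) + E (val u) pb * ((w == b) * F w))); last first.
  by move=> w _; case: (E _ pa); case: (E _ pb); case: (w == a); case: (w == b); rewrite /= ?mul0n ?mul1n ?addn0 ?add0n ?mulnDl ?mul1n ?mul0n.
rewrite !big_split /= -!big_distrr /= !sum_pred1 //.
- by rewrite andbC bpb bpa.
- by rewrite apa apb.
Qed.

Lemma cut_col x (x' : V') : val x' = x -> is_leaf E x -> forall u : V',
  npaths E' u x' + (x == b) * npaths E (val u) a = npaths E (val u) x + (x == b) * (val u == a).
Proof.
move=> Hx lx.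
have acE' := cut_acyclic.
have fa : npaths E a x = (a == x) by apply: npaths_leaf.
have fb : npaths E b x = (b == x) by apply: npaths_leaf.
have ga : npaths E a a = 1 by rewrite npaths_leaf ?eqxx.
have gb : npaths E b a = 0 by rewrite npaths_leaf // eq_sym (negbTE ab).
have fpb : npaths E pb x = npaths E b x.
  rewrite npaths_rec // (sum_ch1 _ ch_pb Epbb).
  have -> : (pb == x) = false by apply/negP => /eqP e; have := nleaf_of Epbb; rewrite e lx.
  by [].
have gpb : npaths E pb a = 0.
  by rewrite npaths_rec // (sum_ch1 _ ch_pb Epbb) gb eq_sym (negbTE apb).
have fpa : npaths E pa x = npaths E a x + npaths E pb x.
  rewrite npaths_rec // (sum_ch2 _ apb ch_pa Epaa Epapb).
  have -> : (pa == x) = false by apply/negP => /eqP e; have := nleaf_of Epaa; rewrite e lx.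
  by [].
have gpa : npaths E pa a = 1.
  rewrite npaths_rec // (sum_ch2 _ apb ch_pa Epaa Epapb) ga gpb.
  by rewrite eq_sym (negbTE apa).
suff H : forall n u, m (val u) < n ->
  npaths E' u x' + (x == b) * npaths E (val u) a = npaths E (val u) x + (x == b) * (val u == a).
  by move=> u; exact: (H _ u (ltnSn _)).
elim=> [//|n IH] u Hu.
have IHs : \sum_(w' : V') E' u w' * npaths E' w' x' + (x == b) * \sum_(w' : V') E' u w' * npaths E (val w') a
   = \sum_(w' : V') E' u w' * (npaths E (val w') x + (x == b) * (val w' == a)).
  rewrite big_distrr -big_split; apply: eq_bigr => w' _ /=.
  case Ew: (E' u w'); last by rewrite !mul0n muln0.
  rewrite !mul1n; apply: IH; exact: leq_trans (cut_rank Ew) Hu.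
rewrite (npaths_rec x' u acE') (npaths_rec x (val u) Hac) (npaths_rec a (val u) Hac).
move: IHs; rewrite (sum_cut (fun w => npaths E w a)) (sum_cut (fun w => npaths E w x + (x == b) * (w == a))).
rewrite (split2 (fun w => E (val u) w * npaths E w x) papb).
rewrite (split2 (fun w => E (val u) w * npaths E w a) papb).
have -> : \sum_(w | (w != pa) && (w != pb)) E (val u) w * (npaths E w x + (x == b) * (w == a))
   = \sum_(w | (w != pa) && (w != pb)) E (val u) w * npaths E w x.
  apply: eq_bigr => w /andP[w1 w2]; case: (eqVneq w a) => [->|wa]; last by rewrite muln0 addn0.
  have -> : E (val u) a = false by apply/negP => /par_a e; have := valP u; rewrite e eqxx.
  by [].
have -> : (u == x') = (val u == x) by rewrite -Hx.
rewrite fpa fpb gpa gpb ga gb fa fb ?eqxx /=.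
case: (eqVneq x b) => [->|xb].
  rewrite [b == a]eq_sym (negbTE ab) ?mul1n ?mul0n ?muln1 ?muln0 ?addn0 ?add0n => H.
  eapply arith1; [exact H|reflexivity].
rewrite ?mul1n ?mul0n ?muln1 ?muln0 ?addn0 ?add0n => H.
eapply arith2; [exact H|reflexivity].
Qed.

Lemma cut_leaf (u : V') : is_leaf E' u = is_leaf E (val u).
Proof.
have Ha : (a != pa) && (a != pb) by rewrite apa apb.
have Hb : (b != pa) && (b != pb) by rewrite bpa bpb.
rewrite !leafP; apply/forallP/forallP => H w.
  apply/negP => Huw.
  case: (eqVneq w pa) => [e|wpa].
    rewrite e in Huw; have := H (exist _ a Ha); rewrite /cut_rel /= Huw.
    by rewrite Epaa apb /= orbT.
  case: (eqVneq w pb) => [e|wpb].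
    rewrite e in Huw; have := H (exist _ b Hb); rewrite /cut_rel /= Huw Epbb.
    by case/andP: (valP u) => -> _; rewrite /= !orbT.
  have Hw : (w != pa) && (w != pb) by rewrite wpa wpb.
  by have := H (exist _ w Hw); rewrite /cut_rel /= Huw.
by rewrite /cut_rel !(negbTE (H _)).
Qed.
End Cut.

Section Red.
Variables (V : finType) (E : rel V) (a b p : V) (m : V -> nat).
Hypotheses (Hac : acyclic E) (Hm : forall u w, E u w -> m w < m u)
  (la : is_leaf E a) (lb : is_leaf E b) (ab : a != b)
  (Epa : E p a) (Epb : E p b)
  (par_a : forall y, E y a -> y = p) (par_b : forall y, E y b -> y = p)
  (ch_p : forall w, E p w -> (w == a) || (w == b)).

Notation V' := (red_vert b p).
Notation E' := (red_rel E b p).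

Lemma ap : a != p.
Proof. by apply/eqP => e; have := nleaf_of Epa; rewrite -e la. Qed.
Lemma bp : b != p.
Proof. by apply/eqP => e; have := nleaf_of Epa; rewrite -e lb. Qed.

Lemma red_rank (u w : V') : E' u w -> m (val w) < m (val u).
Proof.
rewrite /red_rel => /orP[H|/andP[H1 H2]]; first exact: Hm.
exact: ltn_trans (Hm H2) (Hm H1).
Qed.

Lemma red_acyclic : acyclic E'.
Proof. exact: (acyclic_rank (m := fun u => m (val u)) red_rank). Qed.

Lemma red_E (u w : V') : (E' u w : nat) = E (val u) (val w) + (E (val u) p && (val w == a)).
Proof.
case: u w => [U HU] [W HW] /=; case/andP: (HU) => U1 U2; case/andP: (HW) => W1 W2.
rewrite /red_rel /=.
have -> : E p W = (W == a).
  apply/idP/idP => [H|/eqP ->//]; by have := ch_p H; rewrite (negbTE W1) orbF.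
case: (eqVneq W a) => [->|Wa].
  have -> : E U a = false by apply/negP => /par_a e; rewrite e eqxx in U2.
  by rewrite andbT /=; case: (E U p).
by rewrite !andbF orbF addn0.
Qed.

Lemma sum_red (F : V -> nat) (u : V') :
  \sum_(w' : V') E' u w' * F (val w') =
  \sum_(w | (w != b) && (w != p)) E (val u) w * F w + E (val u) p * F a.
Proof.
rewrite (eq_bigr (fun w' : V' => (E (val u) (val w') + (E (val u) p && (val w' == a))) * F (val w'))); last by move=> w' _; rewrite red_E.
rewrite -(sum_sig (fun w => (w != b) && (w != p)) (fun w => (E (val u) w + (E (val u) p && (w == a))) * F w)).
rewrite (eq_bigr (fun w => E (val u) w * F w + E (val u) p * ((w == a) * F w))); last first.
  by move=> w _; case: (E _ p); case: (w == a); rewrite /= ?mul0n ?mul1n ?addn0 ?add0n ?mulnDl ?mul1n ?mul0n.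
rewrite !big_split /= -!big_distrr /= !sum_pred1 //.
by rewrite ab ap.
Qed.

Lemma red_col x (x' : V') : val x' = x -> is_leaf E x -> x != b -> forall u : V',
  npaths E' u x' = npaths E (val u) x.
Proof.
move=> Hx lx xb.
have acE' := red_acyclic.
have fb : npaths E b x = 0 by rewrite npaths_leaf // eq_sym (negbTE xb).
have fp : npaths E p x = npaths E a x.
  rewrite npaths_rec // (sum_ch2 _ ab ch_p Epa Epb) fb addn0.
  have -> : (p == x) = false by apply/negP => /eqP e; have := nleaf_of Epa; rewrite e lx.
  by [].
suff H : forall n u, m (val u) < n -> npaths E' u x' = npaths E (val u) x.
  by move=> u; exact: (H _ u (ltnSn _)).
elim=> [//|n IH] u Hu.
rewrite (npaths_rec x' u acE') (npaths_rec x (val u) Hac).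
have -> : (u == x') = (val u == x) by rewrite -Hx.
congr addn.
rewrite (eq_bigr (fun w' : V' => E' u w' * npaths E (val w') x)); last first.
  move=> w' _; case Ew: (E' u w'); last by rewrite !mul0n.
  by rewrite !mul1n; apply: IH; exact: leq_trans (red_rank Ew) Hu.
rewrite (sum_red (fun w => npaths E w x)) (split2 (fun w => E (val u) w * npaths E w x) bp) fp.
have -> : E (val u) b = false by apply/negP => /par_b e; have := valP u; rewrite e eqxx andbF.
by rewrite mul0n add0n addnC.
Qed.

Lemma red_leaf (u : V') : is_leaf E' u = is_leaf E (val u).
Proof.
have Ha : (a != b) && (a != p) by rewrite ab ap.
rewrite !leafP; apply/forallP/forallP => H w.
  apply/negP => Huw.
  case: (eqVneq w p) => [e|wp].
    rewrite e in Huw; have := H (exist _ a Ha); rewrite /red_rel /= Huw.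
    by rewrite Epa orbT.
  case: (eqVneq w b) => [e|wb].
    rewrite e in Huw; have := par_b Huw => e'; have := valP u; rewrite e' eqxx andbF.
    by [].
  have Hw : (w != b) && (w != p) by rewrite wp wb.
  by have := H (exist _ w Hw); rewrite /red_rel /= Huw.
by rewrite /red_rel !(negbTE (H _)).
Qed.
End Red.

Section Ord.
Variables (V : finType) (P : pred V) (E : rel V) (E' : rel {x | P x}) (ord ordV : seq V).
Hypotheses (HuV : uniq ordV) (HmV : forall y, (y \in ordV) = (y \in ord) && P y)
  (Hord : is_ordering E ord) (Hleaf : forall u : {x | P x}, is_leaf E' u = is_leaf E (val u)).

Definition ordp := pmap (insub : V -> option {x | P x}) ordV.
Lemma ord_ok : is_ordering E' ordp /\ map val ordp = ordV.
Proof.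
split; first split.
- exact: pmap_sub_uniq.
- by move=> u; rewrite mem_pmap_sub HmV (valP u) andbT Hleaf; case: Hord => _ ->.
rewrite (pmap_filter (insubK _)); apply/all_filterP/allP => y.
by rewrite HmV => /andP[_ Py]; rewrite /= insubT.
Qed.
End Ord.

Section S.
Variables (V : eqType) (d : V) (ord : seq V) (J : seq nat).
Hypothesis Hu : uniq ord.
Definition Sseq := [seq nth d ord i | i <- iota 0 (size ord) & i \notin J].

Lemma mem_S y : (y \in Sseq) = (y \in ord) && (index y ord \notin J).
Proof.
apply/mapP/andP => [[i] |[yo yJ]].
  rewrite mem_filter mem_iota add0n => /andP[iJ /andP[_ Hi]] ->.
  by rewrite mem_nth // index_uniq.
exists (index y ord); last by rewrite nth_index.
by rewrite mem_filter yJ mem_iota add0n index_mem yo.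
Qed.

Lemma uniq_S : uniq Sseq.
Proof.
rewrite map_inj_in_uniq ?filter_uniq ?iota_uniq //.
move=> i i'; rewrite !mem_filter !mem_iota !add0n => /andP[_ /andP[_ Hi]] /andP[_ /andP[_ Hi']].
by move/eqP; rewrite nth_uniq // => /eqP.
Qed.

Lemma del_idx_map (g : V -> nat) :
  del_idx J (map g ord) = map g Sseq.
Proof.
rewrite /del_idx /Sseq size_map -map_comp; apply/eq_in_map => i.
rewrite mem_filter mem_iota add0n => /andP[_ /andP[_ Hi]].
by rewrite (nth_map d) //.
Qed.
End S.

Section Net.
Variables (V : finType) (E : rel V).
Hypotheses (Hn : phylo_network E) (Hl : 1 < #|[set x | is_leaf E x]|).

Lemma net_acyclic : acyclic E.
Proof. by case: Hn. Qed.

Lemma net_root : exists r : V,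
     [/\ forall v, (indeg E v == 0) = (v == r),
         outdeg E r = 2 &
         forall v, v != r ->
           [\/ indeg E v = 1 /\ outdeg E v = 0,
               indeg E v = 1 /\ outdeg E v = 2 |
               indeg E v = 2 /\ outdeg E v = 1]].
Proof.
case: Hn => _ [H1|//].
by have := max_card (mem [set x | is_leaf E x]); rewrite H1 => H; have := leq_ltn_trans H Hl; rewrite ltnn.
Qed.

Lemma leaf_indeg v : is_leaf E v -> indeg E v = 1.
Proof.
move=> lv; have [r [Hr Hor Hoth]] := net_root.
have vr : v != r by apply/eqP => e; move: lv; rewrite /is_leaf e Hor.
move: lv; rewrite /is_leaf => /eqP lv.
by case: (Hoth v vr) => [[]|[_ H]|[_ H]] //; rewrite lv in H.
Qed.

Lemma outdeg_le2 v : outdeg E v <= 2.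
Proof.
have [r [Hr Hor Hoth]] := net_root.
case: (eqVneq v r) => [->|vr]; first by rewrite Hor.
by case: (Hoth v vr) => [[_ ->]|[_ ->]|[_ ->]].
Qed.

Lemma indeg2_outdeg v : indeg E v = 2 -> outdeg E v = 1.
Proof.
have [r [Hr Hor Hoth]] := net_root => Hv.
have vr : v != r by rewrite -Hr Hv.
by case: (Hoth v vr) => [[H _]|[H _]|[_ ->]] //; rewrite Hv in H.
Qed.

Lemma uniq_par v y z : indeg E v = 1 -> E y v -> E z v -> y = z.
Proof.
move/eqP/cards1P => [c Hc] Ey Ez.
have : y \in [set u | E u v] by rewrite inE.
have : z \in [set u | E u v] by rewrite inE.
by rewrite Hc !inE => /eqP -> /eqP ->.
Qed.

Lemma two_ch v c d : E v c -> E v d -> c != d -> forall w, E v w -> (w == c) || (w == d).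
Proof.
move=> Ec Ed cd w Ew.
have Hs : [set c; d] \subset [set w | E v w].
  by apply/subsetP => y; rewrite !inE => /orP[] /eqP ->.
have Hle := outdeg_le2 v; rewrite /outdeg in Hle.
have Hc : #|[set w | E v w]| = 2.
  by apply/eqP; rewrite eqn_leq Hle /=; have := subset_leq_card Hs; rewrite cards2 cd.
have Heq : [set c; d] = [set w | E v w].
  by apply/eqP; rewrite -(subset_leqif_cards Hs).2 cards2 cd Hc.
have : w \in [set w | E v w] by rewrite inE.
by rewrite -Heq !inE.
Qed.

Lemma one_ch v c : outdeg E v = 1 -> E v c -> forall w, E v w -> w == c.
Proof.
move/eqP/cards1P => [z Hz] Ec w Ew.
have : c \in [set u | E v u] by rewrite inE.
have : w \in [set u | E v u] by rewrite inE.
by rewrite Hz !inE => /eqP -> /eqP ->.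
Qed.
End Net.

Lemma anc_nth (V : finType) (E : rel V) (ord : seq V) (d x : V) j :
  j < size ord -> nth 0 (anc_tuple E ord x) j = npaths E (nth d ord j) x.
Proof. by move=> Hj; rewrite /anc_tuple (nth_map d). Qed.

Lemma partI (V : finType) (E : rel V) (ord : seq V) :
  phylo_network E ->
  1 < #|[set x | is_leaf E x]| ->
  is_ordering E ord ->
  (forall (a b p : V) (j : nat),
      a != b -> is_leaf E a -> is_leaf E b -> E p a -> E p b ->
      j < size ord ->
      nth 0 (anc_tuple E ord a) j = 1 ->
      nth 0 (anc_tuple E ord b) j = 1 ->
      (forall x, is_leaf E x -> x != a -> x != b -> nth 0 (anc_tuple E ord x) j = 0) ->
      exists ord' : seq (red_vert b p),
        is_ordering (red_rel E b p) ord' /\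
        forall (x : V) (sg : seq nat),
          profile (red_rel E b p) ord' val x sg <->
          [/\ is_leaf E x, x != b & sg = del_idx [:: j] (anc_tuple E ord x)]).
Proof.
move=> Hn Hl Hord a b p j ab la lb Epa Epb Hj ja jb jx.
have Hac := net_acyclic Hn.
have [m Hm] := rank_exists Hac.
have par_a : forall y, E y a -> y = p by move=> y Ey; exact: (uniq_par (leaf_indeg Hn Hl la) Ey Epa).
have par_b : forall y, E y b -> y = p by move=> y Ey; exact: (uniq_par (leaf_indeg Hn Hl lb) Ey Epb).
have ch_p := two_ch Hn Hl Epa Epb ab.
have uo : uniq ord by case: Hord.
have memo : forall v, (v \in ord) = ~~ is_leaf E v by case: Hord.
set vj := nth p ord j.
rewrite !(@anc_nth _ E ord p _ j Hj) -/vj in ja jb.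
have jx' : forall x, is_leaf E x -> x != a -> x != b -> npaths E vj x = 0.
  by move=> x lx xa xb; rewrite /vj -(@anc_nth _ E ord p _ j Hj) jx.
have pl : ~~ is_leaf E p by exact: nleaf_of Epa.
have colj : forall x, is_leaf E x -> x != b -> npaths E vj x = npaths E p x.
  move=> x lx xb.
  rewrite [npaths E p x](npaths_rec x p Hac) (sum_ch2 _ ab ch_p Epa Epb) [npaths E a x](npaths_leaf _ Hac la) [npaths E b x](npaths_leaf _ Hac lb).
  have -> : (p == x) = false by apply/negP => /eqP e; rewrite e lx in pl.
  rewrite (eq_sym b x) (negbTE xb) addn0 /=.
  case: (eqVneq x a) => [->|xa]; first by rewrite ja.
  by rewrite jx' // eq_sym (negbTE xa).
have bo : b \notin ord by rewrite memo lb.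
have po : p \in ord by rewrite memo.
have vjo : vj \in ord by rewrite mem_nth.
have ivj : index vj ord = j by rewrite index_uniq.
set f := fun v => if v == p then vj else v.
set S := Sseq p ord [:: j].
set ordV := map f S.
have HuV : uniq ordV.
  rewrite map_inj_in_uniq ?uniq_S //.
  move=> v1 v2; rewrite !mem_S // !inE => /andP[o1 i1] /andP[o2 i2]; rewrite /f.
  case: (eqVneq v1 p) => [->|v1p]; case: (eqVneq v2 p) => [->|v2p] //.
  + by move=> e; rewrite -e ivj eqxx in i2.
  + by move=> e; rewrite e ivj eqxx in i1.
have HmV : forall y, (y \in ordV) = (y \in ord) && ((y != b) && (y != p)).
  move=> y; apply/mapP/andP => [[v] |[yo /andP[yb yp]]].
    rewrite mem_S // inE /f => /andP[vo vi].
    case: (eqVneq v p) => [e|vp] ->.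
      rewrite vjo; split => //; apply/andP; split.
        by apply/eqP => e'; rewrite -e' vjo in bo.
      by apply/eqP => e'; rewrite e -e' ivj eqxx in vi.
    split => //; rewrite vp andbT; by apply/eqP => e'; rewrite -e' vo in bo.
  case: (eqVneq (index y ord) j) => [iy|iy].
    exists p; last by rewrite /f eqxx /vj -iy nth_index.
    rewrite mem_S // po inE; apply/eqP => ip.
    have : nth p ord (index y ord) = nth p ord (index p ord) by rewrite iy ip.
    by rewrite !nth_index // => e; rewrite e eqxx in yp.
  exists y; last by rewrite /f (negbTE yp).
  by rewrite mem_S // yo inE.
have Hleaf := red_leaf la ab Epa par_b.
have [Hord' Hmap] := ord_ok HuV HmV Hord Hleaf.
exists (ordp (fun v => (v != b) && (v != p)) ordV); split => //.
have key : forall (x : V) (x' : red_vert b p), val x' = x -> is_leaf E x -> x != b ->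
   anc_tuple (red_rel E b p) (ordp (fun v => (v != b) && (v != p)) ordV) x' = del_idx [:: j] (anc_tuple E ord x).
  move=> x x' Hx lx xb.
  rewrite /anc_tuple (eq_map (red_col Hac Hm la lb ab Epa Epb par_a par_b ch_p Hx lx xb)).
  rewrite (map_comp (fun v => npaths E v x) val) Hmap (del_idx_map p) -map_comp.
  apply/eq_in_map => v _ /=; rewrite /f; case: (eqVneq v p) => [->|//].
  exact: colj.
move=> x sg; split.
  move=> [x' [lx' Hx' ->]].
  have lx : is_leaf E x by rewrite -Hx' -Hleaf.
  have xb : x != b by rewrite -Hx'; case/andP: (valP x').
  by split => //; apply: key.
move=> [lx xb ->].
have xp : x != p by apply/eqP => e; rewrite -e lx in pl.
have Hx : (x != b) && (x != p) by rewrite xb xp.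
exists (exist _ x Hx); split => //; first by rewrite Hleaf.
by rewrite (key x).
Qed.

Lemma partII (V : finType) (E : rel V) (ord : seq V) :
  phylo_network E ->
  1 < #|[set x | is_leaf E x]| ->
  is_ordering E ord ->
  (forall (a b pa pb : V) (j k : nat),
      a != b -> is_leaf E a -> is_leaf E b -> E pa a -> E pb b ->
      indeg E pb = 2 -> E pa pb ->
      j < size ord -> k < size ord ->
      nth 0 (anc_tuple E ord a) j = 1 ->
      nth 0 (anc_tuple E ord b) j = 1 ->
      (forall x, is_leaf E x -> x != a -> x != b -> nth 0 (anc_tuple E ord x) j = 0) ->
      nth 0 (anc_tuple E ord b) k = 1 ->
      (forall x, is_leaf E x -> x != b -> nth 0 (anc_tuple E ord x) k = 0) ->
      exists ord' : seq (cut_vert pa pb),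
        is_ordering (cut_rel E pa pb) ord' /\
        forall (x : V) (sg : seq nat),
          profile (cut_rel E pa pb) ord' val x sg <->
          [/\ is_leaf E x &
              sg = if x == b then
                     [seq nth 0 (anc_tuple E ord b) i - nth 0 (anc_tuple E ord a) i
                     | i <- iota 0 (size ord) & i \notin [:: j; k]]
                   else del_idx [:: j; k] (anc_tuple E ord x)]).
Proof.
move=> Hn Hl Hord a b pa pb j k ab la lb Epaa Epbb Hin Epapb Hj Hk ja jb jx kb kx.
have Hac := net_acyclic Hn.
have [m Hm] := rank_exists Hac.
have par_a : forall y, E y a -> y = pa by move=> y Ey; exact: (uniq_par (leaf_indeg Hn Hl la) Ey Epaa).
have par_b : forall y, E y b -> y = pb by move=> y Ey; exact: (uniq_par (leaf_indeg Hn Hl lb) Ey Epbb).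
have pal : ~~ is_leaf E pa by exact: nleaf_of Epaa.
have pbl : ~~ is_leaf E pb by exact: nleaf_of Epbb.
have apb : a != pb by apply/eqP => e; rewrite -e la in pbl.
have ch_pa := two_ch Hn Hl Epaa Epapb apb.
have ch_pb := one_ch (indeg2_outdeg Hn Hl Hin) Epbb.
have uo : uniq ord by case: Hord.
have memo : forall v, (v \in ord) = ~~ is_leaf E v by case: Hord.
set vj := nth pa ord j.
set vk := nth pa ord k.
rewrite !(@anc_nth _ E ord pa _ j Hj) -/vj in ja jb.
rewrite !(@anc_nth _ E ord pa _ k Hk) -/vk in kb.
have jx' : forall x, is_leaf E x -> x != a -> x != b -> npaths E vj x = 0.
  by move=> x lx xa xb; rewrite /vj -(@anc_nth _ E ord pa _ j Hj) jx.
have kx' : forall x, is_leaf E x -> x != b -> npaths E vk x = 0.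
  by move=> x lx xb; rewrite /vk -(@anc_nth _ E ord pa _ k Hk) kx.
have fpb : forall x, is_leaf E x -> npaths E pb x = (x == b).
  move=> x lx; rewrite (npaths_rec x pb Hac) (sum_ch1 _ ch_pb Epbb) (npaths_leaf _ Hac lb).
  have -> : (pb == x) = false by apply/negP => /eqP e; rewrite e lx in pbl.
  by rewrite eq_sym.
have fpa : forall x, is_leaf E x -> npaths E pa x = (x == a) + (x == b).
  move=> x lx; rewrite (npaths_rec x pa Hac) (sum_ch2 _ apb ch_pa Epaa Epapb) (npaths_leaf _ Hac la) fpb //.
  have -> : (pa == x) = false by apply/negP => /eqP e; rewrite e lx in pal.
  by rewrite eq_sym.
have colj : forall x, is_leaf E x -> npaths E vj x = npaths E pa x.
  move=> x lx; rewrite fpa //.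
  case: (eqVneq x a) => [->|xa]; first by rewrite ja (negbTE ab).
  case: (eqVneq x b) => [->|xb]; first by rewrite jb.
  by rewrite jx'.
have colk : forall x, is_leaf E x -> npaths E vk x = npaths E pb x.
  move=> x lx; rewrite fpb //.
  case: (eqVneq x b) => [->|xb]; first by rewrite kb.
  by rewrite kx'.
have vjpb : vj != pb by apply/eqP => e; move: (colj a la); rewrite e fpa // fpb // eqxx (negbTE ab).
have vkpa : vk != pa by apply/eqP => e; move: (colk a la); rewrite e fpa // fpb // eqxx (negbTE ab).
have vjo : vj \in ord by rewrite mem_nth.
have vko : vk \in ord by rewrite mem_nth.
have ivj : index vj ord = j by rewrite index_uniq.
have ivk : index vk ord = k by rewrite index_uniq.
have jk : j != k.
  apply/eqP => e; have e' : vj = vk by rewrite /vj /vk e.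
  by move: (colk a la); rewrite -e' ja fpb // (negbTE ab).
have pao : pa \in ord by rewrite memo.
have pbo : pb \in ord by rewrite memo.
have papb : pa != pb by apply/eqP => e; rewrite -e in pbl; have := Hm _ _ Epapb; rewrite e ltnn.
have ixj : forall z, z \in ord -> index z ord = j -> z = vj by move=> z zo e; rewrite /vj -e nth_index.
have ixk : forall z, z \in ord -> index z ord = k -> z = vk by move=> z zo e; rewrite /vk -e nth_index.
set f := fun v => if v == pa then vj else if v == pb then vk else v.
have colf : forall x v, is_leaf E x -> npaths E (f v) x = npaths E v x.
  move=> x v lx; rewrite /f; case: (eqVneq v pa) => [->|_]; first exact: colj.
  case: (eqVneq v pb) => [->|_] //; exact: colk.
set S := Sseq pa ord [:: j; k].
set ordV := map f S.
have HuV : uniq ordV.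
  rewrite map_inj_in_uniq ?uniq_S //.
  move=> v1 v2; rewrite !mem_S // !inE => /andP[o1 i1] /andP[o2 i2]; rewrite /f.
  case: (eqVneq v1 pa) => [->|n1]; case: (eqVneq v2 pa) => [->|n2] //;
  try case: (eqVneq v1 pb) => [->|m1]; try case: (eqVneq v2 pb) => [->|m2] //;
  move=> /(congr1 (fun z => index z ord)) /=; rewrite ?ivj ?ivk => ei;
  try (by rewrite ei eqxx in jk); try (by rewrite -ei eqxx ?orbT in i1 i2);
  try (by rewrite ei eqxx ?orbT in i1 i2).
have HmV : forall y, (y \in ordV) = (y \in ord) && ((y != pa) && (y != pb)).
  move=> y; apply/mapP/andP => [[v] |[yo /andP[ya yb]]].
    rewrite mem_S // !inE /f => /andP[vo vi].
    case: (eqVneq v pa) => [e|vpa].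
      move=> ->; rewrite vjo vjpb andbT; split => //; apply/eqP => e'.
      by rewrite -e' in e; rewrite e ivj eqxx in vi.
    case: (eqVneq v pb) => [e|vpb].
      move=> ->; rewrite vko vkpa /=; split => //; apply/eqP => e'.
      by rewrite -e' in e; rewrite e ivk eqxx orbT in vi.
    by move=> ->; rewrite vo vpa vpb.
  case: (eqVneq (index y ord) j) => [iy|iy].
    exists pa; last by rewrite /f eqxx (ixj _ yo iy).
    rewrite mem_S // pao !inE; apply/norP; split; apply/eqP => ip.
      by have := ixj _ pao ip; rewrite -(ixj _ yo iy) => e; rewrite e eqxx in ya.
    by have := ixk _ pao ip => e; rewrite e eqxx in vkpa.
  case: (eqVneq (index y ord) k) => [iy'|iy'].
    exists pb; last by rewrite /f eqxx eq_sym (negbTE papb) (ixk _ yo iy').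
    rewrite mem_S // pbo !inE; apply/norP; split; apply/eqP => ip.
      by have := ixj _ pbo ip => e; rewrite e eqxx in vjpb.
    by have := ixk _ pbo ip; rewrite -(ixk _ yo iy') => e; rewrite e eqxx in yb.
  exists y; last by rewrite /f (negbTE ya) (negbTE yb).
  by rewrite mem_S // yo !inE negb_or iy iy'.
have Hleaf := cut_leaf la lb Epaa Epbb.
have [Hord' Hmap] := ord_ok HuV HmV Hord Hleaf.
set ord' := ordp (fun v => (v != pa) && (v != pb)) ordV.
have Hval : forall u : cut_vert pa pb, u \in ord' -> val u != a.
  move=> u; rewrite /ord' mem_pmap_sub HmV => /andP[uoo _].
  by apply/eqP => e; rewrite e memo la in uoo.
have key : forall (x : V) (x' : cut_vert pa pb), val x' = x -> is_leaf E x ->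
   anc_tuple (cut_rel E pa pb) ord' x' =
   if x == b then
     [seq nth 0 (anc_tuple E ord b) i - nth 0 (anc_tuple E ord a) i
     | i <- iota 0 (size ord) & i \notin [:: j; k]]
   else del_idx [:: j; k] (anc_tuple E ord x).
  move=> x x' Hx lx.
  have Hc := cut_col Hac Hm la lb ab Epaa Epbb Epapb par_a par_b ch_pa ch_pb Hx lx.
  rewrite /anc_tuple.
  case: (eqVneq x b) => [xb|xb].
    have e1 : forall u, u \in ord' -> npaths (cut_rel E pa pb) u x' = npaths E (val u) b - npaths E (val u) a.
      move=> u Hu; have := Hc u; rewrite xb eqxx (negbTE (Hval u Hu)) mul1n addn0 => <-.
      by rewrite addnK.
    have e2 : map (fun u => npaths (cut_rel E pa pb) u x') ord' = map (fun u => npaths E (val u) b - npaths E (val u) a) ord' by apply/eq_in_map.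
    rewrite e2.
    rewrite (map_comp (fun v => npaths E v b - npaths E v a) val) Hmap /ordV /S /Sseq -!map_comp.
    apply/eq_in_map => i; rewrite mem_filter mem_iota add0n => /andP[_ /andP[_ Hi]] /=.
    by rewrite !(nth_map pa) // !colf.
  have e1 : forall u, npaths (cut_rel E pa pb) u x' = npaths E (val u) x.
    by move=> u; have := Hc u; rewrite (negbTE xb) !mul0n !addn0.
  rewrite (eq_map e1) (map_comp (fun v => npaths E v x) val) Hmap /ordV (del_idx_map pa) -map_comp.
  by apply/eq_in_map => v _ /=; rewrite colf.
exists ord'; split => //.
move=> x sg; split.
  move=> [x' [lx' Hx' ->]].
  have lx : is_leaf E x by rewrite -Hx' -Hleaf.
  by split => //; apply: key.
move=> [lx ->].
have xpa : x != pa by apply/eqP => e; rewrite -e lx in pal.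
have xpb : x != pb by apply/eqP => e; rewrite -e lx in pbl.
have Hx : (x != pa) && (x != pb) by rewrite xpa xpb.
exists (exist _ x Hx); split => //; first by rewrite Hleaf.
by rewrite (key x).
Qed.
Unset Implicit Arguments.

Theorem lemma5p1 (V : finType) (E : rel V) (ord : seq V) :
  phylo_network E ->
  1 < #|[set x | is_leaf E x]| ->
  is_ordering E ord ->
  (* (i) cherry *)
  (forall (a b p : V) (j : nat),
      a != b -> is_leaf E a -> is_leaf E b -> E p a -> E p b ->
      j < size ord ->
      nth 0 (anc_tuple E ord a) j = 1 ->
      nth 0 (anc_tuple E ord b) j = 1 ->
      (forall x, is_leaf E x -> x != a -> x != b -> nth 0 (anc_tuple E ord x) j = 0) ->
      exists ord' : seq (red_vert b p),
        is_ordering (red_rel E b p) ord' /\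
        forall (x : V) (sg : seq nat),
          profile (red_rel E b p) ord' val x sg <->
          [/\ is_leaf E x, x != b & sg = del_idx [:: j] (anc_tuple E ord x)])
  /\
  (* (ii) reticulated cherry with reticulation leaf b *)
  (forall (a b pa pb : V) (j k : nat),
      a != b -> is_leaf E a -> is_leaf E b -> E pa a -> E pb b ->
      indeg E pb = 2 -> E pa pb ->
      j < size ord -> k < size ord ->
      nth 0 (anc_tuple E ord a) j = 1 ->
      nth 0 (anc_tuple E ord b) j = 1 ->
      (forall x, is_leaf E x -> x != a -> x != b -> nth 0 (anc_tuple E ord x) j = 0) ->
      nth 0 (anc_tuple E ord b) k = 1 ->
      (forall x, is_leaf E x -> x != b -> nth 0 (anc_tuple E ord x) k = 0) ->
      exists ord' : seq (cut_vert pa pb),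
        is_ordering (cut_rel E pa pb) ord' /\
        forall (x : V) (sg : seq nat),
          profile (cut_rel E pa pb) ord' val x sg <->
          [/\ is_leaf E x &
              sg = if x == b then
                     [seq nth 0 (anc_tuple E ord b) i - nth 0 (anc_tuple E ord a) i
                     | i <- iota 0 (size ord) & i \notin [:: j; k]]
                   else del_idx [:: j; k] (anc_tuple E ord x)]).
Proof.
move=> Hn Hl Hord; split; [exact: (partI Hn Hl Hord) | exact: (partII Hn Hl Hord)].
Qed.
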